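(* Let $p$ be an odd prime and let $n,s$ be positive integers such that $2n/s\geq 3$ is an odd integer; put $q=p^n$, $d=p^s$. For any $k=\alpha^d+\alpha\in\mathbb{F}_{q^2}$ (with $\alpha\in\mathbb{F}_{q^2}$), the map \[ \phi_k\big((a^d+a,x)\big)=\big(a^d+a+k,\ x+a^d\alpha+a\alpha^d+\alpha^{d+1}\big) \] is an automorphism of the graph $\mathcal{A}_{q^2,d}$.
   Context: The map $x\mapsto x^d+x$ is a bijection of $\mathbb{F}_{q^2}$. The graph $\mathcal{A}_{q^2,d}$ has vertex set $\mathbb{F}_{q^2}\times\mathbb{F}_{q^2}$; writing vertices as $(a^d+a,x)$ and $(b^d+b,y)$ with $a,b,x,y\in\mathbb{F}_{q^2}$ (uniquely), two distinct vertices are adjacent iff $a^db+ab^d=x+y$. *)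

(* Defs.v *)
From HB Require Import structures.
From mathcomp Require Import all_boot all_order all_algebra all_field.
Set Implicit Arguments. Unset Strict Implicit. Unset Printing Implicit Defensive.
Import GRing.Theory.
Local Open Scope ring_scope.

Definition adjA (F : fieldType) (d : nat) (v w : F * F) : Prop :=
  v <> w /\
  exists a b : F, v.1 = a ^+ d + a /\ w.1 = b ^+ d + b /\
                  a ^+ d * b + a * b ^+ d = v.2 + w.2.

Definition is_autA (F : fieldType) (d : nat) (f : F * F -> F * F) : Prop :=
  bijective f /\ forall v w, adjA d (f v) (f w) <-> adjA d v w.

(* Main.v *)
Require Import Defs.
From HB Require Import structures.
From mathcomp Require Import all_boot all_order all_algebra all_field.
From mathcomp Require Import ring.
Import GRing.Theory.
Local Open Scope ring_scope.

Theorem lemma8 (p n s : nat) (F : finFieldType) (alpha : F) :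
  prime p -> odd p -> (0 < n)%N -> (0 < s)%N ->
  (s %| 2 * n)%N -> odd (2 * n %/ s) -> (3 <= 2 * n %/ s)%N ->
  #|F| = (p ^ (2 * n))%N ->
  let d := (p ^ s)%N in
  let k := alpha ^+ d + alpha in
  exists phi : F * F -> F * F,
    (forall a x : F,
        phi (a ^+ d + a, x) =
        (a ^+ d + a + k, x + a ^+ d * alpha + a * alpha ^+ d + alpha ^+ d.+1))
    /\ is_autA d phi.
Proof.
intros pr_p odd_p n0 s0 sdv oddm m3 cardF d k.
have chp : p \in [pchar F] by exact: card_finPcharP cardF pr_p.
have dnat : ([pchar F]).-nat d by rewrite /d pnatX pnatE // chp.
have frD : forall x y : F, (x + y) ^+ d = x ^+ d + y ^+ d.
  by move=> x y; apply: exprDn_pchar.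
have d0 : (0 < d)%N by rewrite /d expn_gt0 prime_gt0.
have frN : forall x : F, (- x) ^+ d = - x ^+ d.
  move=> x; apply/eqP; rewrite -subr_eq0 opprK -frD addNr expr0n.
  by rewrite eqn0Ngt d0.
pose T := fun a : F => a ^+ d + a.
have TD : forall a b, T (a + b) = T a + T b.
  by move=> a b; rewrite /T frD; ring.
have Tinj : injective T.
  have key : forall c, T c = 0 -> c = 0.
    move=> c; rewrite /T => /eqP; rewrite addr_eq0 => /eqP cd.
    have c2 : c ^+ (d * d) = c by rewrite exprM cd frN cd opprK.
    have ci : forall i, c ^+ (d ^ (2 * i)) = c.
      elim=> [|i IH]; first by rewrite expr1.
      by rewrite mulnS expnD exprM -mulnn c2 IH.
    set m := (2 * n %/ s)%N in oddm m3.
    have em : (s * m = 2 * n)%N by rewrite /m mulnC divnK.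
    have [i mi] : exists i, m = (2 * i).+1.
      by exists m./2; rewrite -{1}(odd_double_half m) oddm -muln2 mulnC.
    have cF : c ^+ (d ^ m) = c by rewrite /d -expnM em -cardF expf_card.
    move: cF; rewrite mi expnS mulnC exprM ci cd => /eqP.
    rewrite eq_sym -subr_eq0 opprK -mulr2n -mulr_natr mulf_eq0 => /orP [/eqP //|].
    rewrite -(dvdn_pcharf chp) => pd2; have p2 := dvdn_leq (isT : (0 < 2)%N) pd2.
    have p2' : p = 2%N.
      by apply/eqP; rewrite eqn_leq p2 prime_gt1.
    by move: odd_p; rewrite p2'.
  move=> x y Txy; apply/eqP; rewrite -subr_eq0; apply/eqP/key.
  by rewrite TD Txy -TD addrN /T expr0n eqn0Ngt d0 add0r.
have [Ti TK TiK] := injF_bij Tinj.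
pose g := fun a : F => a ^+ d * alpha + a * alpha ^+ d + alpha ^+ d.+1.
pose phi := fun v : F * F => (v.1 + k, v.2 + g (Ti v.1)).
have adjE : forall v w, adjA d v w <->
    v <> w /\ (Ti v.1) ^+ d * Ti w.1 + Ti v.1 * (Ti w.1) ^+ d = v.2 + w.2.
  move=> v w; split.
    case=> ne [a [b [e1 [e2 e3]]]]; split=> //.
    by rewrite e1 e2 (TK a) (TK b).
  case=> ne e; split=> //; exists (Ti v.1), (Ti w.1).
  by split; [exact: (esym (TiK v.1)) | split; [exact: (esym (TiK w.1)) |]].
have TiS : forall u, Ti (u + k) = Ti u + alpha.
  by move=> u; apply: Tinj; rewrite TiK TD TiK.
have phiinj : injective phi.
  move=> [u x] [u' x'] [e1 e2].
  have eu : u = u' by apply: (addIr k).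
  by move: e2; rewrite /= eu => /addIr ->.
exists phi; split.
  by move=> a x; rewrite /phi /= (TK a) /g !addrA.
split; first exact: injF_bij phiinj.
move=> v w; rewrite !adjE /phi /= !TiS.
set a := Ti v.1; set b := Ti w.1.
have L : (a + alpha) ^+ d * (b + alpha) + (a + alpha) * (b + alpha) ^+ d
    = (a ^+ d * b + a * b ^+ d) + (g a + g b).
  have ed : alpha ^+ d.+1 = alpha ^+ d * alpha := exprSr alpha d.
  rewrite !frD /g ed. ring.
have R : v.2 + g a + (w.2 + g b) = (v.2 + w.2) + (g a + g b) by ring.
rewrite L R; split; case=> ne e; split.
- by move=> vw; apply: ne; rewrite /a /b vw.
- exact: addIr e.
- by move=> pe; apply: ne; exact: phiinj.
- by rewrite e.
Qed.
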